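(* Let $T_1$ be a quadtree in $\mathbb{R}^d$ and $T^*$ its extended quadtree. Let $C_1,C_2$ be two family related (possibly non-leaf) cells of $T^*$ with $|C_1|\le|C_2|$. Then the brand of $C_2$ is at most the brand of $C_1$.
   Context: A quadtree on an axis-aligned root hypercube $R\subset\mathbb{R}^d$ is a hierarchical decomposition in which every node has an associated axis-aligned hypercube (cell) and is either a leaf or has $2^d$ equal-sized children whose cells subdivide its cell. The size $|C|$ of a cell is its edge length. Two cells are neighbors if they are interior-disjoint and share (part of) a $(d-1)$-dimensional facet. Two cells $C_1,C_2$ with $|C_1|\le|C_2|$ are family related if the parent of $C_2$ is an ancestor of $C_1$ (they need not be neighbors). For an integer $j$, a cell $C$ is $2^j$-smooth if every leaf neighboring $C$ has size at most $2^j|C|$. Extended quadtree: the cells of $T_1$ get brand $1$. Recursively, for $j\ge1$, let $T^j$ be the quadtree formed by $\bigcup_{i\le j}T_i$, and let $T_{j+1}$ be the minimal set of cells obtained by splitting cells of $T^j$ such that every cell of $T_j$ is $2^j$-smooth in the resulting quadtree; the cells of $T_{j+1}$ get brand $j+1$. The extended quadtree is $T^*=T^{d+1}$. *)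

(* Defs.v *)
From mathcomp Require Import all_boot all_order all_algebra.
Set Implicit Arguments. Unset Strict Implicit. Unset Printing Implicit Defensive.
Import Order.TTheory GRing.Theory Num.Theory.
Local Open Scope ring_scope.

(* A (dyadic) cell of the root cube: level k and integer position a, denoting
   the cube  prod_i [a_i / 2^k, (a_i+1) / 2^k]  (root cube normalized to [0,1]^d). *)
Definition cell (d : nat) : Type := (nat * {ffun 'I_d -> nat})%type.

Section Cells.
Variable d : nat.
Implicit Types c p q : cell d.

Definition lvl c : nat := c.1.
Definition pos c : {ffun 'I_d -> nat} := c.2.

Definition valid c : Prop := forall i, (pos c i < 2 ^ lvl c)%N.

Definition root_cell : cell d := (0%N, [ffun _ => 0%N]).

Definition is_child c p : Prop :=
  lvl c = (lvl p).+1 /\ forall i, (pos c i %/ 2 = pos p i)%N.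

Definition parent_of p c : Prop := is_child c p.

Definition ancestor a c : Prop :=
  (lvl a <= lvl c)%N /\ forall i, (pos c i %/ 2 ^ (lvl c - lvl a) = pos a i)%N.

Definition lo c (i : 'I_d) : rat := (pos c i)%:R / (2 ^+ lvl c).
Definition hi c (i : 'I_d) : rat := (pos c i).+1%:R / (2 ^+ lvl c).
Definition cell_size c : rat := (2 ^+ lvl c)^-1.

Definition interior_disjoint c1 c2 : Prop :=
  exists i, hi c1 i <= lo c2 i \/ hi c2 i <= lo c1 i.

Definition share_facet_part c1 c2 : Prop :=
  exists j, (hi c1 j = lo c2 j \/ hi c2 j = lo c1 j) /\
    forall i, i != j -> lo c1 i < hi c2 i /\ lo c2 i < hi c1 i.

Definition neighbors c1 c2 : Prop := interior_disjoint c1 c2 /\ share_facet_part c1 c2.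

(* family related, for |C1| <= |C2|: the parent of C2 is an ancestor of C1 *)
Definition family_related c1 c2 : Prop :=
  exists p, parent_of p c2 /\ ancestor p c1.

Record quadtree (T : cell d -> Prop) : Prop := {
  qt_root : T root_cell;
  qt_valid : forall c, T c -> valid c;
  qt_parent : forall c, T c -> (0 < lvl c)%N -> exists p, T p /\ parent_of p c;
  qt_children : forall p c c', T c -> is_child c p -> is_child c' p -> T c';
  qt_finite : exists s : seq (cell d), forall c, T c -> c \in s
}.

Definition leaf (T : cell d -> Prop) c : Prop :=
  T c /\ forall c', is_child c' c -> ~ T c'.

Definition smooth (T : cell d -> Prop) (j : nat) c : Prop :=
  forall L, leaf T L -> neighbors L c -> cell_size L <= 2 ^+ j * cell_size c.

(* ext T1 n = (T^(n+1), T_(n+1)) : the tree formed by the first n+1 brands and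
   the cells of brand n+1.  T^(j+1) is the minimal quadtree containing T^j in
   which every cell of T_j is 2^j-smooth (the intersection of all such trees). *)
Fixpoint ext (T1 : cell d -> Prop) (n : nat) : (cell d -> Prop) * (cell d -> Prop) :=
  match n with
  | 0 => (T1, T1)
  | m.+1 =>
      let Tj := (ext T1 m).1 in
      let Bj := (ext T1 m).2 in
      let Tj1 := fun c => forall Q, quadtree Q -> (forall x, Tj x -> Q x) ->
                   (forall x, Bj x -> smooth Q m.+1 x) -> Q c in
      (Tj1, fun c => Tj1 c /\ ~ Tj c)
  end.

Definition extended (T1 : cell d -> Prop) : cell d -> Prop := (ext T1 d).1.

Definition has_brand (T1 : cell d -> Prop) c (j : nat) : Prop :=
  (1 <= j <= d.+1)%N /\ (ext T1 j.-1).2 c.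

End Cells.

(* Main.v *)
Require Import Defs.
From mathcomp Require Import all_boot all_order all_algebra.
Import Order.TTheory GRing.Theory Num.Theory.
Local Open Scope ring_scope.
Set Implicit Arguments. Unset Strict Implicit.

Section Aux.
Variable d : nat.
Implicit Types c p : cell d.

Definition canpar c : cell d := ((lvl c).-1, [ffun i => (pos c i %/ 2)%N]).
Definition anc (k : nat) c : cell d := (k, [ffun i => (pos c i %/ 2 ^ (lvl c - k))%N]).

Definition pclosed (S : cell d -> Prop) :=
  forall c, S c -> (0 < lvl c)%N -> S (canpar c).
Definition sclosed (S : cell d -> Prop) :=
  forall p c c', S c -> is_child c p -> is_child c' p -> S c'.

Lemma parent_eq p c : is_child c p -> p = canpar c.
Proof.
case=> Hl Hp; case: p Hl Hp => l f /= Hl Hp.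
rewrite /canpar Hl /=; congr pair; apply/ffunP => i; by rewrite ffunE Hp.
Qed.

Lemma quadtree_closed (T : cell d -> Prop) : quadtree T -> pclosed T /\ sclosed T.
Proof.
move=> hT; split; last exact: qt_children hT.
move=> c Tc Hl; have [p [Tp Hp]] := qt_parent hT Tc Hl.
by rewrite -(parent_eq Hp).
Qed.

Lemma anc_in (S : cell d -> Prop) : pclosed S ->
  forall n c, lvl c = n -> S c -> forall k, (k <= n)%N -> S (anc k c).
Proof.
move=> HS; elim=> [|n IH] c Hc Sc k Hk.
  move: Hk; rewrite leqn0 => /eqP ->.
  case: c Hc Sc => l f /= -> Sc; rewrite /anc /=.
  have -> : [ffun i => (f i %/ 2 ^ (0 - 0))%N] = f by apply/ffunP=> i; rewrite ffunE divn1.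
  done.
case: (ltngtP k n.+1) Hk => // [Hk _|-> _].
  have Sp := HS c Sc ltac:(by rewrite Hc).
  have := IH (canpar c) ltac:(by rewrite /canpar /lvl /= -/(lvl c) Hc) Sp k ltac:(by []).
  congr S; rewrite /anc /canpar /=; congr pair; apply/ffunP => i; rewrite !ffunE.
  rewrite -/(lvl c) Hc /= -divnMA -expnS; congr divn; congr expn.
  by rewrite subSn.
case: c Hc Sc => l f /= -> Sc; rewrite /anc /=.
have -> : [ffun i => (f i %/ 2 ^ (n.+1 - n.+1))%N] = f by apply/ffunP=> i; rewrite ffunE subnn divn1.
done.
Qed.

Lemma ext_closed (T1 : cell d -> Prop) : quadtree T1 ->
  forall m, pclosed (ext T1 m).1 /\ sclosed (ext T1 m).1.
Proof.
move=> hT1; case=> [|m]; first exact: quadtree_closed.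
split.
  move=> c Sc Hl /= Q hQ H1 H2; exact: (proj1 (quadtree_closed hQ)) (Sc Q hQ H1 H2) Hl.
move=> p c c' Sc Hc Hc' /= Q hQ H1 H2; apply: (qt_children hQ) Hc Hc'; exact: Sc.
Qed.

Lemma ext_mono (T1 : cell d -> Prop) m n : (m <= n)%N ->
  forall c, (ext T1 m).1 c -> (ext T1 n).1 c.
Proof.
elim: n => [|n IH]; first by rewrite leqn0 => /eqP ->.
rewrite leq_eqVlt => /orP [/eqP -> //|]; rewrite ltnS => Hmn c Hc.
rewrite /= => Q hQ H1 H2; apply: H1; exact: IH.
Qed.

Lemma brand_in (T1 : cell d -> Prop) c b : has_brand T1 c b -> (ext T1 b.-1).1 c.
Proof. by case=> _; case: b.-1 => [//|m] /= []. Qed.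

End Aux.

Theorem lemma15 (d : nat) (T1 : cell d -> Prop) (hT1 : quadtree T1)
  (C1 C2 : cell d) (b1 b2 : nat) :
  extended T1 C1 -> extended T1 C2 ->
  family_related C1 C2 -> cell_size C1 <= cell_size C2 ->
  has_brand T1 C1 b1 -> has_brand T1 C2 b2 ->
  (b2 <= b1)%N.
Proof.
move=> _ _ [p [[HlC2 HpC2] [Hlp Hap]]] Hsz Hb1 Hb2.
have Hl : (lvl C2 <= lvl C1)%N.
  move: Hsz; rewrite /cell_size lef_pV2 ?qualifE /= ?exprn_gt0 //.
  by rewrite ler_eXn2l // ltr1n.
set S := (ext T1 b1.-1).1.
have [PS SS] := ext_closed hT1 b1.-1.
have S1 : S C1 by exact: brand_in Hb1.
have Sch : S (anc (lvl p).+1 C1).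
  apply: (anc_in PS (erefl _) S1); by rewrite -HlC2.
have Hch : is_child (anc (lvl p).+1 C1) p.
  split=> // i; rewrite /anc /= ffunE -Hap.
  rewrite -divnMA -expnSr; congr (_ %/ 2 ^ _)%N.
  by rewrite subnSK // -HlC2.
have S2 : S C2 by exact: SS Hch (conj HlC2 HpC2).
case: (leqP b2 b1) => // Hlt; exfalso.
have H1b1 : (0 < b1)%N by case: Hb1 => /andP [].
case: b2 Hb2 Hlt => [|[|n]] Hb2 Hlt //; first by move: Hlt H1b1; case: b1 {Hb1 S S1 Sch S2 PS SS}.
case: Hb2 => _ [_] /=; apply; apply: ext_mono S2.
by move: Hlt H1b1; case: b1 {Hb1 S S1 Sch PS SS} => //= b1 H _; rewrite -ltnS.
Qed.
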